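(* Let $0<\delta<1/3$, $d_s\ge\delta/2$, $d_x\ge0$. Define $\mathcal D_1=\{0\le d_x\le2\delta,\ d_s\ge d_x/2+\delta/2\}$; $\mathcal D_2=\{2\delta\le d_x\le1/2+\delta/2,\ d_s\ge d_x-\delta/2\}$; $\mathcal D_3=\{d_x\ge d_s+\delta/2,\ \delta/2\le d_s\le1/2\}$; $\mathcal D_4=\{2d_s-\delta\le d_x\le d_s+\delta/2,\ \delta/2\le d_s\le3\delta/2\}$; $\mathcal D_5=\{d_x\ge1/2+\delta/2,\ d_s\ge1/2\}$. Then, with $x,y\in\{0,1,e\}$, $z\in\{0,1\}$: (i) if $(d_s,d_x)\in\mathcal D_1$, $R(d_s,d_x)=h(\delta)+(1-\delta)\log2-h(d_x)-d_x\log2$, attained by $X-Y^\star-Z^\star$ Markov with $P_{Y^\star}(0)=P_{Y^\star}(1)=\frac{1-\delta-d_x}{2-3d_x}$, $P_{Y^\star}(e)=\frac{2\delta-d_x}{2-3d_x}$, $P_{X|Y^\star}(x|y)=1-d_x$ if $x=y$ and $d_x/2$ otherwise, $P_{Z^\star|Y^\star}(z|y)=1$ if $z=y$, $P_{Z^\star|Y^\star}(0|e)=\theta$, $P_{Z^\star|Y^\star}(1|e)=1-\theta$, and $0$ otherwise, for any $\theta\in[0,1]$; (ii) if $(d_s,d_x)\in\mathcal D_2$, $R(d_s,d_x)=(1-\delta)[\log2-h((d_x-\delta)/(1-\delta))]$, attained by $X-Y^\star-Z^\star$ with $P_{Y^\star}(0)=P_{Y^\star}(1)=1/2$, $P_{Y^\star}(e)=0$,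 $P_{X|Y^\star}(x|y)=1-d_x$ if $x=y\ne e$, $d_x-\delta$ if $x\ne y$ with $x,y\ne e$, $\delta$ if $x=e,y\ne e$, and $Z^\star=Y^\star$; (iii) if $(d_s,d_x)\in\mathcal D_3$, $R(d_s,d_x)=(1-\delta)[\log2-h((d_s-\delta/2)/(1-\delta))]$, attained by $X-Z^\star-Y^\star$ with $P_{Z^\star}$ uniform on $\{0,1\}$, $P_{X|Z^\star}(x|z)=1-d_s-\delta/2$ if $x=z$, $d_s-\delta/2$ if $x\ne z,x\ne e$, $\delta$ if $x=e$, and $Y^\star=Z^\star$; (iv) if $(d_s,d_x)\in\mathcal D_4$, $R(d_s,d_x)=h(\delta)+(1-\delta)\log2-H(d_s-\delta/2,\ d_x-d_s+\delta/2,\ 1-d_x)$, attained by $P_{Z^\star Y^\star}(z,y)=\frac{\delta+d_x-1}{\delta+4d_x-2d_s-2}$ if $z=y$, $\frac{d_x-d_s-\delta/2}{\delta+4d_x-2d_s-2}$ if $y=e$, $0$ otherwise, together with $P_{X|Z^\star Y^\star}(x|z,y)=1-d_x$ for $(x|z,y)\in\{(0|0,0),(1|1,1),(e|0,e),(e|1,e)\}$; $d_s-\delta/2$ for $(x|z,y)\in\{(1|0,0),(0|1,1),(1|0,e),(0|1,e)\}$; $d_x-d_s+\delta/2$ for $(x|z,y)\in\{(e|0,0),(e|1,1),(0|0,e),(1|1,e)\}$; $0$ otherwise; (v) if $(d_s,d_x)\in\mathcal D_5$, $R(d_s,d_x)=0$. Here ''attained by'' means the displayed joint distribution of $(X,Z^\star,Y^\star)$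 has $X$-marginal $P_X$ and its conditional $P_{Z^\star Y^\star|X}$ is a minimizer in the definition of $R(d_s,d_x)$.
   Context: Erased fair coin flips: $S$ is uniform on $\{0,1\}$, and $X\in\{0,1,e\}$ is the output of a binary erasure channel with erasure probability $\delta$ and input $S$ (so $X=S$ w.p. $1-\delta$, $X=e$ w.p. $\delta$). Reconstructions $Z\in\{0,1\}$ for $S$ and $Y\in\{0,1,e\}$ for $X$, with Hamming distortions $\mathsf d_s(s,z)=1\{s\ne z\}$, $\mathsf d_x(x,y)=1\{x\ne y\}$. Let $\bar{\mathsf d}_s(x,z)=\mathbb E[\mathsf d_s(S,z)\mid X=x]$. $R(d_s,d_x)=\min_{P_{ZY|X}}I(X;Z,Y)$ subject to $\mathbb E[\bar{\mathsf d}_s(X,Z)]\le d_s$ and $\mathbb E[\mathsf d_x(X,Y)]\le d_x$. $h(p)=-p\log p-(1-p)\log(1-p)$ is the binary entropy and $H(p_1,p_2,p_3)=-\sum_ip_i\log p_i$, with $0\log0=0$ and the same logarithm base as in the mutual information. *)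

(* Defs.v *)
From Stdlib Require Import Reals Lra.
Open Scope R_scope.

(* Alphabets: sym = {0,1,e} (for X and Y), bit = {0,1} (for S and Z). *)
Inductive sym : Type := s0 | s1 | se.
Inductive bit : Type := b0 | b1.

Definition sym_eqb (x y : sym) : bool :=
  match x, y with s0, s0 | s1, s1 | se, se => true | _, _ => false end.
Definition bit_eqb (a c : bit) : bool :=
  match a, c with b0, b0 | b1, b1 => true | _, _ => false end.
Definition zy_eq (z : bit) (y : sym) : bool :=
  match z, y with b0, s0 | b1, s1 => true | _, _ => false end.

Definition sumS (f : sym -> R) : R := f s0 + f s1 + f se.
Definition sumB (f : bit -> R) : R := f b0 + f b1.

Definition logb (b x : R) : R := ln x / ln b.

Definition xlogx (b p : R) : R := if Req_EM_T p 0 then 0 else p * logb b p.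
Definition h (b p : R) : R := - xlogx b p - xlogx b (1 - p).
Definition H3 (b p1 p2 p3 : R) : R := - (xlogx b p1 + xlogx b p2 + xlogx b p3).

(* Source: S uniform on {0,1}, X = BEC(delta) output. Joint P_{SX}. *)
Definition PSX (delta : R) (s : bit) (x : sym) : R :=
  / 2 * (match x with
         | se => delta
         | _ => if zy_eq s x then 1 - delta else 0
         end).
Definition PX (delta : R) (x : sym) : R := sumB (fun s => PSX delta s x).

Definition dist_s (s z : bit) : R := if bit_eqb s z then 0 else 1.
Definition dist_x (x y : sym) : R := if sym_eqb x y then 0 else 1.
Definition dbar_s (delta : R) (x : sym) (z : bit) : R :=
  sumB (fun s => PSX delta s x * dist_s s z) / PX delta x.

(* A test channel P_{ZY|X}: W x z y = P(Z=z, Y=y | X=x). *)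
Definition kernel := sym -> bit -> sym -> R.

Definition valid_kernel (W : kernel) : Prop :=
  (forall x z y, 0 <= W x z y) /\
  (forall x, sumB (fun z => sumS (fun y => W x z y)) = 1).

Definition Edist_s (delta : R) (W : kernel) : R :=
  sumS (fun x => sumB (fun z => sumS (fun y =>
    PX delta x * W x z y * dbar_s delta x z))).
Definition Edist_x (delta : R) (W : kernel) : R :=
  sumS (fun x => sumB (fun z => sumS (fun y =>
    PX delta x * W x z y * dist_x x y))).

Definition feasible (delta ds dx : R) (W : kernel) : Prop :=
  valid_kernel W /\ Edist_s delta W <= ds /\ Edist_x delta W <= dx.

Definition plogq (b p q : R) : R := if Req_EM_T p 0 then 0 else p * logb b (p / q).

Definition Qout (delta : R) (W : kernel) (z : bit) (y : sym) : R :=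
  sumS (fun x => PX delta x * W x z y).

Definition MI (b delta : R) (W : kernel) : R :=
  sumS (fun x => sumB (fun z => sumS (fun y =>
    plogq b (PX delta x * W x z y) (PX delta x * Qout delta W z y)))).

Definition minimizer (b delta ds dx : R) (W : kernel) : Prop :=
  feasible delta ds dx W /\
  forall W', feasible delta ds dx W' -> MI b delta W <= MI b delta W'.

(* a joint distribution J x z y = P(X=x, Z*=z, Y*=y) *)
Definition joint := sym -> bit -> sym -> R.
Definition cond_of (delta : R) (J : joint) : kernel :=
  fun x z y => J x z y / PX delta x.

Definition attains (b delta ds dx : R) (J : joint) (r : R) : Prop :=
  (forall x, sumB (fun z => sumS (fun y => J x z y)) = PX delta x) /\
  minimizer b delta ds dx (cond_of delta J) /\
  MI b delta (cond_of delta J) = r.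

Definition D1 (delta ds dx : R) : Prop := 0 <= dx <= 2 * delta /\ ds >= dx / 2 + delta / 2.
Definition D2 (delta ds dx : R) : Prop := 2 * delta <= dx <= / 2 + delta / 2 /\ ds >= dx - delta / 2.
Definition D3 (delta ds dx : R) : Prop := dx >= ds + delta / 2 /\ delta / 2 <= ds <= / 2.
Definition D4 (delta ds dx : R) : Prop :=
  2 * ds - delta <= dx <= ds + delta / 2 /\ delta / 2 <= ds <= 3 * delta / 2.
Definition D5 (delta ds dx : R) : Prop := dx >= / 2 + delta / 2 /\ ds >= / 2.

Definition PY1 (delta dx : R) (y : sym) : R :=
  match y with
  | se => (2 * delta - dx) / (2 - 3 * dx)
  | _ => (1 - delta - dx) / (2 - 3 * dx)
  end.
Definition PXgY1 (dx : R) (x y : sym) : R := if sym_eqb x y then 1 - dx else dx / 2.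
Definition PZgY1 (theta : R) (z : bit) (y : sym) : R :=
  match y with
  | se => match z with b0 => theta | b1 => 1 - theta end
  | _ => if zy_eq z y then 1 else 0
  end.
Definition J1 (delta dx theta : R) : joint :=
  fun x z y => PY1 delta dx y * PXgY1 dx x y * PZgY1 theta z y.

Definition PY2 (y : sym) : R := match y with se => 0 | _ => / 2 end.
Definition PXgY2 (delta dx : R) (x y : sym) : R :=
  match y with
  | se => 0 (* irrelevant: P_{Y*}(e) = 0 *)
  | _ => if sym_eqb x y then 1 - dx
         else match x with se => delta | _ => dx - delta end
  end.
Definition J2 (delta dx : R) : joint :=
  fun x z y => PY2 y * PXgY2 delta dx x y * (if zy_eq z y then 1 else 0).

Definition PXgZ3 (delta ds : R) (x : sym) (z : bit) : R :=
  match x with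
  | se => delta
  | _ => if zy_eq z x then 1 - ds - delta / 2 else ds - delta / 2
  end.
Definition J3 (delta ds : R) : joint :=
  fun x z y => / 2 * PXgZ3 delta ds x z * (if zy_eq z y then 1 else 0).

Definition PZY4 (delta ds dx : R) (z : bit) (y : sym) : R :=
  if zy_eq z y then (delta + dx - 1) / (delta + 4 * dx - 2 * ds - 2)
  else match y with
       | se => (dx - ds - delta / 2) / (delta + 4 * dx - 2 * ds - 2)
       | _ => 0
       end.
Definition PXgZY4 (delta ds dx : R) (x : sym) (z : bit) (y : sym) : R :=
  match x, z, y with
  | s0, b0, s0 | s1, b1, s1 | se, b0, se | se, b1, se => 1 - dx
  | s1, b0, s0 | s0, b1, s1 | s1, b0, se | s0, b1, se => ds - delta / 2
  | se, b0, s0 | se, b1, s1 | s0, b0, se | s1, b1, se => dx - ds + delta / 2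
  | _, _, _ => 0
  end.
Definition J4 (delta ds dx : R) : joint :=
  fun x z y => PZY4 delta ds dx z y * PXgZY4 delta ds dx x z y.

(* Main.v *)
Require Import Defs.
From Stdlib Require Import Reals Lra.
Open Scope R_scope.

Lemma ln0 : ln 0 = 0.
Proof. unfold ln. case (Rlt_dec 0 0); intros r; [exfalso; apply (Rlt_irrefl 0 r)|reflexivity]. Qed.

Lemma ln_le_sub1 x : 0 < x -> ln x <= x - 1.
Proof. intros. pose proof (exp_ineq1_le (ln x)). rewrite exp_ln in H0; lra. Qed.

Lemma lndiv x y : 0 < x -> 0 < y -> ln (x / y) = ln x - ln y.
Proof. intros. unfold Rdiv. rewrite ln_mult, ln_Rinv; try lra. apply Rinv_0_lt_compat; auto. Qed.

Lemma lnb_pos b : 1 < b -> 0 < ln b.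
Proof. intros. rewrite <- ln_1. apply ln_increasing; lra. Qed.

Definition xl (p : R) : R := if Req_EM_T p 0 then 0 else p * ln p.

Lemma xlogx_eq b p : 1 < b -> xlogx b p = xl p / ln b.
Proof. intros. unfold xlogx, xl, logb. destruct (Req_EM_T p 0).
  - unfold Rdiv; ring.
  - unfold Rdiv; ring. Qed.

Lemma xl_pos p : 0 < p -> xl p = p * ln p.
Proof. intros. unfold xl. destruct (Req_EM_T p 0); [lra|auto]. Qed.

Lemma xl_div x y : 0 <= x -> 0 < y -> xl (x / y) = (xl x - x * ln y) / y.
Proof. intros Hx Hy. unfold xl. destruct (Req_EM_T x 0) as [E|E].
  - subst. unfold Rdiv. rewrite Rmult_0_l. destruct (Req_EM_T 0 0); [|lra]. field; lra.
  - destruct (Req_EM_T (x/y) 0) as [E2|E2].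
    + exfalso. unfold Rdiv in E2. apply Rmult_integral in E2. destruct E2; [lra|].
      apply Rinv_neq_0_compat in H; lra.
    + rewrite lndiv by lra. field. lra. Qed.

Lemma lnq_mul x y : 0 <= x -> 0 < y -> ln (x / y) * x = xl x - x * ln y.
Proof. intros Hx Hy. unfold xl. destruct (Req_EM_T x 0) as [E|E].
  - subst. ring.
  - rewrite lndiv by lra. ring. Qed.

Lemma PX0 d : PX d s0 = (1 - d) / 2.
Proof. unfold PX, sumB, PSX; simpl. field. Qed.
Lemma PX1 d : PX d s1 = (1 - d) / 2.
Proof. unfold PX, sumB, PSX; simpl. field. Qed.
Lemma PXe d : PX d se = d.
Proof. unfold PX, sumB, PSX; simpl. field. Qed.

Lemma PX_pos d x : 0 < d < 1 -> 0 < PX d x.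
Proof. intros. destruct x; rewrite ?PX0, ?PX1, ?PXe; lra. Qed.

Lemma dbar_val d x z : 0 < d < 1 ->
  dbar_s d x z = match x with se => / 2 | _ => if zy_eq z x then 0 else 1 end.
Proof. intros. destruct x, z; unfold dbar_s, sumB, dist_s; rewrite ?PX0, ?PX1, ?PXe;
  unfold PSX; simpl; field; lra. Qed.

Definition isz (x : sym) (z : bit) : bool :=
  match x, z with s0, b0 | s1, b1 | se, _ => true | _, _ => false end.
Definition lamf (L m : R) (x : sym) : R := match x with se => m | _ => L end.
Definition Kc (L m a c : R) : kernel := fun x z y =>
  lamf L m x * (if isz x z then 1 else a) * (if sym_eqb x y then 1 else c).
Definition Gc (L m a c : R) : kernel := fun x z y =>
  ln (lamf L m x) + (if isz x z then 0 else ln a) + (if sym_eqb x y then 0 else ln c).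

Lemma Kc_nn L m a c x z y : 0 < L -> 0 < m -> 0 <= a -> 0 <= c -> 0 <= Kc L m a c x z y.
Proof. intros. unfold Kc. assert (0 < lamf L m x) by (destruct x; simpl; auto).
  destruct (isz x z), (sym_eqb x y); repeat apply Rmult_le_pos; lra. Qed.

Lemma pos2 u v : 0 <= u -> 0 <= v -> 0 < u * v -> 0 < u /\ 0 < v.
Proof. intros. destruct (Rle_lt_or_eq_dec 0 u H); destruct (Rle_lt_or_eq_dec 0 v H0);
  subst; try rewrite Rmult_0_l in H1; try rewrite Rmult_0_r in H1; try lra. Qed.

Lemma Gc_ln L m a c x z y : 0 < L -> 0 < m -> 0 <= a -> 0 <= c ->
  0 < Kc L m a c x z y -> Gc L m a c x z y = ln (Kc L m a c x z y).
Proof. intros HL Hm Ha Hc HK. unfold Kc, Gc in *.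
  assert (Hl : 0 < lamf L m x) by (destruct x; simpl; auto).
  set (l := lamf L m x) in *.
  destruct (isz x z), (sym_eqb x y).
  - rewrite !Rmult_1_r. ring.
  - rewrite Rmult_1_r in *. destruct (pos2 l c) as [_ Hc']; try lra.
    rewrite ln_mult by lra. ring.
  - rewrite Rmult_1_r in *. destruct (pos2 l a) as [_ Ha']; try lra.
    rewrite ln_mult by lra. ring.
  - destruct (pos2 (l * a) c) as [H1 Hc']; try lra. apply Rmult_le_pos; lra.
    destruct (pos2 l a) as [_ Ha']; try lra.
    rewrite !ln_mult by lra. ring. Qed.

Definition SG d (W G : kernel) : R :=
  sumS (fun x => sumB (fun z => sumS (fun y => PX d x * W x z y * G x z y))).

Lemma rowsub (W : kernel) : valid_kernel W -> forall x,
  W x b1 se = 1 - (W x b0 s0 + W x b0 s1 + W x b0 se + W x b1 s0 + W x b1 s1).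
Proof. intros [_ Hs] x. specialize (Hs x). unfold sumB, sumS in Hs. lra. Qed.

Lemma SG_val d W L m a c : 0 < d < 1 -> valid_kernel W ->
  SG d W (Gc L m a c) = (1 - d) * ln L + d * ln m + ln a * (Edist_s d W - d / 2)
     + ln c * Edist_x d W.
Proof. intros Hd HW. pose proof (rowsub W HW) as E.
  unfold SG, Edist_s, Edist_x, sumS, sumB, Gc, dist_x.
  rewrite !dbar_val by lra. rewrite ?PX0, ?PX1, ?PXe. simpl. rewrite !E. field. Qed.

Lemma Eds_W d W : 0 < d < 1 -> valid_kernel W ->
  Edist_s d W = d / 2 + (1 - d) / 2 * (W s0 b1 s0 + W s0 b1 s1 + W s0 b1 se
     + W s1 b0 s0 + W s1 b0 s1 + W s1 b0 se).
Proof. intros Hd HW. pose proof (rowsub W HW) as E.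
  unfold Edist_s, sumS, sumB. rewrite !dbar_val by lra. rewrite ?PX0, ?PX1, ?PXe. simpl.
  rewrite !E. field. Qed.

Lemma Edx_W d W : 0 < d < 1 ->
  Edist_x d W = (1 - d) / 2 * (W s0 b0 s1 + W s0 b0 se + W s0 b1 s1 + W s0 b1 se
     + W s1 b0 s0 + W s1 b0 se + W s1 b1 s0 + W s1 b1 se)
   + d * (W se b0 s0 + W se b0 s1 + W se b1 s0 + W se b1 s1).
Proof. intros Hd. unfold Edist_x, sumS, sumB, dist_x. rewrite ?PX0, ?PX1, ?PXe. simpl.
  field. Qed.

Lemma term_ineq b w q K G : 1 < b -> 0 <= w -> (0 < w -> 0 < q) -> 0 <= q -> 0 <= K ->
  (0 < w -> 0 < K /\ G = ln K) -> plogq b w q * ln b >= w * G + w - q * K.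
Proof. intros Hb Hw Hq Hq0 HK HG. pose proof (lnb_pos b Hb). unfold plogq, logb.
  destruct (Req_EM_T w 0) as [E|E].
  - subst. assert (0 <= q * K) by (apply Rmult_le_pos; lra). lra.
  - assert (Hw' : 0 < w) by (destruct (Rle_lt_or_eq_dec 0 w Hw); [auto | congruence]). specialize (Hq Hw'). destruct (HG Hw') as [HK' ->].
    replace (w * (ln (w / q) / ln b) * ln b) with (w * ln (w / q)) by (field; lra).
    rewrite lndiv by lra.
    assert (HqK : 0 < q * K) by (apply Rmult_lt_0_compat; lra).
    assert (H1 : 0 < q * K / w) by (apply Rdiv_lt_0_compat; [apply Rmult_lt_0_compat|]; lra).
    pose proof (ln_le_sub1 _ H1) as H2. rewrite lndiv, ln_mult in H2 by lra.
    assert (H3 : w * (ln q + ln K - ln w) <= w * (q * K / w - 1)) by (apply Rmult_le_compat_l; lra).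
    replace (w * (q * K / w - 1)) with (q * K - w) in H3 by (field; lra). lra. Qed.

Lemma term_eq b w q K G : 1 < b -> 0 <= w ->
  (0 < w -> 0 < q /\ 0 < K /\ G = ln K /\ w = q * K) -> plogq b w q * ln b = w * G.
Proof. intros Hb Hw H. pose proof (lnb_pos b Hb). unfold plogq, logb.
  destruct (Req_EM_T w 0) as [E|E].
  - subst. ring.
  - assert (Hw' : 0 < w) by (destruct (Rle_lt_or_eq_dec 0 w Hw); [auto | congruence]). destruct (H Hw') as (Hq & HK & -> & Ew).
    replace (w / q) with K by (rewrite Ew; field; lra). field; lra. Qed.

Lemma Qout_nn d W z y : 0 < d < 1 -> valid_kernel W -> 0 <= Qout d W z y.
Proof. intros Hd [Hn _]. unfold Qout, sumS.
  pose proof (PX_pos d s0 Hd). pose proof (PX_pos d s1 Hd). pose proof (PX_pos d se Hd).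
  pose proof (Hn s0 z y). pose proof (Hn s1 z y). pose proof (Hn se z y).
  assert (0 <= PX d s0 * W s0 z y) by (apply Rmult_le_pos; lra).
  assert (0 <= PX d s1 * W s1 z y) by (apply Rmult_le_pos; lra).
  assert (0 <= PX d se * W se z y) by (apply Rmult_le_pos; lra). lra. Qed.

Lemma Qout_ge d W x z y : 0 < d < 1 -> valid_kernel W -> PX d x * W x z y <= Qout d W z y.
Proof. intros Hd [Hn _]. unfold Qout, sumS.
  pose proof (PX_pos d s0 Hd). pose proof (PX_pos d s1 Hd). pose proof (PX_pos d se Hd).
  pose proof (Hn s0 z y). pose proof (Hn s1 z y). pose proof (Hn se z y).
  assert (0 <= PX d s0 * W s0 z y) by (apply Rmult_le_pos; lra).
  assert (0 <= PX d s1 * W s1 z y) by (apply Rmult_le_pos; lra).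
  assert (0 <= PX d se * W se z y) by (apply Rmult_le_pos; lra). destruct x; lra. Qed.

Lemma Qout_sum d W : 0 < d < 1 -> valid_kernel W ->
  sumB (fun z => sumS (fun y => Qout d W z y)) = 1.
Proof. intros Hd HW. pose proof (rowsub W HW) as E. unfold Qout, sumS, sumB.
  rewrite ?PX0, ?PX1, ?PXe. rewrite !E. field. Qed.

Ltac allnn Hn :=
  pose proof (Hn s0 b0 s0); pose proof (Hn s0 b0 s1); pose proof (Hn s0 b0 se);
  pose proof (Hn s0 b1 s0); pose proof (Hn s0 b1 s1); pose proof (Hn s0 b1 se);
  pose proof (Hn s1 b0 s0); pose proof (Hn s1 b0 s1); pose proof (Hn s1 b0 se);
  pose proof (Hn s1 b1 s0); pose proof (Hn s1 b1 s1); pose proof (Hn s1 b1 se);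
  pose proof (Hn se b0 s0); pose proof (Hn se b0 s1); pose proof (Hn se b0 se);
  pose proof (Hn se b1 s0); pose proof (Hn se b1 s1); pose proof (Hn se b1 se).

Lemma converse b d ds dx W L m a c :
  1 < b -> 0 < d < 1 -> feasible d ds dx W -> 0 < L -> 0 < m -> 0 <= a <= 1 -> 0 <= c <= 1 ->
  (a = 0 -> ds - d / 2 <= 0) -> (c = 0 -> dx <= 0) ->
  (1 - d) / 2 * L + (1 - d) / 2 * L * a * c + d * m * c <= 1 ->
  (1 - d) / 2 * L * c + (1 - d) / 2 * L * a * c + d * m <= 1 ->
  ((1 - d) * ln L + d * ln m + ln a * (ds - d / 2) + ln c * dx) / ln b <= MI b d W.
Proof.
  intros Hb Hd [HW [Hs Hx]] HL Hm Ha Hc Ha0 Hc0 C1 C3.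
  pose proof (lnb_pos b Hb) as Hlb.
  assert (Hn := proj1 HW).
  assert (HA0 : a = 0 -> forall x z y, isz x z = false -> W x z y = 0).
  { intros E. specialize (Ha0 E). rewrite Eds_W in Hs by auto. allnn Hn.
    set (S := W s0 b1 s0 + W s0 b1 s1 + W s0 b1 se + W s1 b0 s0 + W s1 b0 s1 + W s1 b0 se) in *.
    assert (S <= 0). { apply (Rmult_le_reg_l ((1 - d) / 2)). lra. lra. }
    unfold S in *. intros x z y Hxz; destruct x, z, y; simpl in Hxz; try discriminate; lra. }
  assert (HC0 : c = 0 -> forall x z y, sym_eqb x y = false -> W x z y = 0).
  { intros E. specialize (Hc0 E). rewrite Edx_W in Hx by auto. allnn Hn.
    set (S1 := W s0 b0 s1 + W s0 b0 se + W s0 b1 s1 + W s0 b1 se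
     + W s1 b0 s0 + W s1 b0 se + W s1 b1 s0 + W s1 b1 se) in *.
    set (S2 := W se b0 s0 + W se b0 s1 + W se b1 s0 + W se b1 s1) in *.
    assert (0 <= S1) by (unfold S1; lra). assert (0 <= S2) by (unfold S2; lra).
    assert (0 <= (1 - d) / 2 * S1) by (apply Rmult_le_pos; lra).
    assert (0 <= d * S2) by (apply Rmult_le_pos; lra).
    assert (S1 <= 0). { apply (Rmult_le_reg_l ((1 - d) / 2)). lra. lra. }
    assert (S2 <= 0). { apply (Rmult_le_reg_l d). lra. lra. }
    unfold S1, S2 in *. intros x z y Hxy; destruct x, z, y; simpl in Hxy; try discriminate; lra. }
  assert (HK : forall x z y, 0 < W x z y -> 0 < Kc L m a c x z y).
  { intros x z y Hw. unfold Kc.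
    assert (Hl : 0 < lamf L m x) by (destruct x; simpl; auto).
    assert (Pa : isz x z = false -> 0 < a).
    { intros Hf. destruct (Rle_lt_or_eq_dec 0 a (proj1 Ha)) as [?|E]; auto.
      rewrite (HA0 (eq_sym E) x z y Hf) in Hw. lra. }
    assert (Pc : sym_eqb x y = false -> 0 < c).
    { intros Hf. destruct (Rle_lt_or_eq_dec 0 c (proj1 Hc)) as [?|E]; auto.
      rewrite (HC0 (eq_sym E) x z y Hf) in Hw. lra. }
    destruct (isz x z), (sym_eqb x y); repeat apply Rmult_lt_0_compat; auto; lra. }
  assert (T : forall x z y,
    plogq b (PX d x * W x z y) (PX d x * Qout d W z y) * ln b >=
    PX d x * W x z y * Gc L m a c x z y + PX d x * W x z y
      - PX d x * Qout d W z y * Kc L m a c x z y).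
  { intros x z y. pose proof (PX_pos d x Hd). pose proof (Hn x z y).
    pose proof (Qout_ge d W x z y Hd HW). pose proof (Qout_nn d W z y Hd HW).
    apply term_ineq; auto.
    - apply Rmult_le_pos; lra.
    - intros; apply Rmult_lt_0_compat; lra.
    - apply Rmult_le_pos; lra.
    - apply Kc_nn; lra.
    - intros Hp. assert (0 < W x z y).
      { destruct (Rle_lt_or_eq_dec 0 (W x z y) (Hn x z y)) as [?|E]; auto.
        rewrite <- E in Hp. lra. }
      split. apply HK; auto. apply Gc_ln; try lra. apply HK; auto. }
  assert (HC : forall z y, Qout d W z y *
     (PX d s0 * Kc L m a c s0 z y + PX d s1 * Kc L m a c s1 z y + PX d se * Kc L m a c se z y)
     <= Qout d W z y).
  { intros z y. rewrite <- (Rmult_1_r (Qout d W z y)) at 2. apply Rmult_le_compat_l.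
    apply Qout_nn; auto.
    assert (0 <= (1 - d) / 2 * L * ((1 - a) * (1 - c))) by (repeat apply Rmult_le_pos; lra).
    rewrite ?PX0, ?PX1, ?PXe. destruct z, y; unfold Kc; simpl; lra. }
  pose proof (Qout_sum d W Hd HW) as QS.
  pose proof (SG_val d W L m a c Hd HW) as SGv.
  assert (Hsum : sumB (fun z => sumS (fun y => PX d s0 * W s0 z y)) +
                 sumB (fun z => sumS (fun y => PX d s1 * W s1 z y)) +
                 sumB (fun z => sumS (fun y => PX d se * W se z y)) = 1).
  { pose proof (rowsub W HW) as E. unfold sumB, sumS. rewrite ?PX0, ?PX1, ?PXe. rewrite !E. field. }
  assert (Hmain : MI b d W * ln b >= SG d W (Gc L m a c)).
  { unfold MI, SG. unfold sumB, sumS in *. cbv beta in *.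
    pose proof (T s0 b0 s0). pose proof (T s0 b0 s1). pose proof (T s0 b0 se).
    pose proof (T s0 b1 s0). pose proof (T s0 b1 s1). pose proof (T s0 b1 se).
    pose proof (T s1 b0 s0). pose proof (T s1 b0 s1). pose proof (T s1 b0 se).
    pose proof (T s1 b1 s0). pose proof (T s1 b1 s1). pose proof (T s1 b1 se).
    pose proof (T se b0 s0). pose proof (T se b0 s1). pose proof (T se b0 se).
    pose proof (T se b1 s0). pose proof (T se b1 s1). pose proof (T se b1 se).
    pose proof (HC b0 s0). pose proof (HC b0 s1). pose proof (HC b0 se).
    pose proof (HC b1 s0). pose proof (HC b1 s1). pose proof (HC b1 se).
    lra. }
  assert (la : ln a <= 0).
  { destruct (Rle_lt_or_eq_dec 0 a (proj1 Ha)) as [?|E].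
    - rewrite <- ln_1. destruct (Rle_lt_or_eq_dec a 1 (proj2 Ha)) as [?|E2].
      + left. apply ln_increasing; lra.
      + rewrite E2; lra.
    - rewrite <- E, ln0; lra. }
  assert (lc : ln c <= 0).
  { destruct (Rle_lt_or_eq_dec 0 c (proj1 Hc)) as [?|E].
    - rewrite <- ln_1. destruct (Rle_lt_or_eq_dec c 1 (proj2 Hc)) as [?|E2].
      + left. apply ln_increasing; lra.
      + rewrite E2; lra.
    - rewrite <- E, ln0; lra. }
  assert (ln a * (ds - d / 2) <= ln a * (Edist_s d W - d / 2))
    by (apply Rmult_le_compat_neg_l; lra).
  assert (ln c * dx <= ln c * Edist_x d W) by (apply Rmult_le_compat_neg_l; lra).
  unfold Rdiv. apply (Rmult_le_reg_r (ln b)); auto.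
  rewrite Rmult_assoc, Rinv_l, Rmult_1_r by lra. lra.
Qed.

Lemma achieve b d W L m a c : 1 < b -> 0 < d < 1 -> valid_kernel W -> 0 < L -> 0 < m ->
  0 <= a -> 0 <= c ->
  (forall x z y, W x z y = Qout d W z y * Kc L m a c x z y) ->
  MI b d W * ln b = SG d W (Gc L m a c).
Proof. intros Hb Hd HW HL Hm Ha Hc HE.
  assert (T : forall x z y,
    plogq b (PX d x * W x z y) (PX d x * Qout d W z y) * ln b =
    PX d x * W x z y * Gc L m a c x z y).
  { intros x z y. pose proof (PX_pos d x Hd). pose proof (proj1 HW x z y).
    pose proof (Qout_nn d W z y Hd HW). pose proof (Kc_nn L m a c x z y HL Hm Ha Hc).
    apply (term_eq b _ _ (Kc L m a c x z y)); auto. apply Rmult_le_pos; lra.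
    intros Hp. assert (Hw : 0 < W x z y).
    { destruct (Rle_lt_or_eq_dec 0 (W x z y) H0) as [?|E]; auto. rewrite <- E in Hp. lra. }
    rewrite HE in Hw. destruct (pos2 _ _ H1 H2 Hw) as [HQ HK].
    split. apply Rmult_lt_0_compat; lra. split; auto. split.
    apply Gc_ln; auto. rewrite HE at 1. ring. }
  unfold MI, SG, sumB, sumS. cbv beta. rewrite !Rmult_plus_distr_r, !T. reflexivity.
Qed.

Lemma cond_Qout d J z y : 0 < d < 1 ->
  Qout d (cond_of d J) z y = J s0 z y + J s1 z y + J se z y.
Proof. intros Hd. unfold Qout, cond_of, sumS. rewrite ?PX0, ?PX1, ?PXe. field. lra. Qed.

Lemma cond_Eds d J : 0 < d < 1 ->
  Edist_s d (cond_of d J) = (J s0 b1 s0 + J s0 b1 s1 + J s0 b1 se) + (J s1 b0 s0 + J s1 b0 s1 + J s1 b0 se)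
   + / 2 * (J se b0 s0 + J se b0 s1 + J se b0 se + J se b1 s0 + J se b1 s1 + J se b1 se).
Proof. intros Hd. unfold Edist_s, cond_of, sumS, sumB. rewrite !dbar_val by lra.
  rewrite ?PX0, ?PX1, ?PXe. simpl. field. lra. Qed.

Lemma cond_Edx d J : 0 < d < 1 ->
  Edist_x d (cond_of d J) = (J s0 b0 s1 + J s0 b0 se + J s0 b1 s1 + J s0 b1 se
     + J s1 b0 s0 + J s1 b0 se + J s1 b1 s0 + J s1 b1 se)
   + (J se b0 s0 + J se b0 s1 + J se b1 s0 + J se b1 s1).
Proof. intros Hd. unfold Edist_x, cond_of, sumS, sumB, dist_x.
  rewrite ?PX0, ?PX1, ?PXe. simpl. field. lra. Qed.

Lemma attains_gen b d ds dx (J : joint) L m a c r :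
  1 < b -> 0 < d < 1 ->
  (forall x, sumB (fun z => sumS (fun y => J x z y)) = PX d x) ->
  (forall x z y, 0 <= J x z y) ->
  0 < L -> 0 < m -> 0 <= a <= 1 -> 0 <= c <= 1 ->
  (a = 0 -> ds - d / 2 <= 0) -> (c = 0 -> dx <= 0) ->
  (1 - d) / 2 * L + (1 - d) / 2 * L * a * c + d * m * c <= 1 ->
  (1 - d) / 2 * L * c + (1 - d) / 2 * L * a * c + d * m <= 1 ->
  Edist_s d (cond_of d J) <= ds -> Edist_x d (cond_of d J) <= dx ->
  ln a * (Edist_s d (cond_of d J) - d / 2) = ln a * (ds - d / 2) ->
  ln c * Edist_x d (cond_of d J) = ln c * dx ->
  (forall x z y, J x z y / PX d x = (J s0 z y + J s1 z y + J se z y) * Kc L m a c x z y) ->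
  r * ln b = (1 - d) * ln L + d * ln m + ln a * (ds - d / 2) + ln c * dx ->
  attains b d ds dx J r.
Proof.
  intros Hb Hd Hm Hn HL Hmm Ha Hc Ha0 Hc0 C1 C3 Hs Hx Es Ex HE Hr.
  pose proof (lnb_pos b Hb) as Hlb.
  assert (HW : valid_kernel (cond_of d J)).
  { split.
    - intros x z y. unfold cond_of. pose proof (PX_pos d x Hd).
      apply Rmult_le_pos; auto. left; apply Rinv_0_lt_compat; auto.
    - intros x. specialize (Hm x). pose proof (PX_pos d x Hd). unfold cond_of.
      unfold sumB, sumS in *.
      replace (J x b0 s0 / PX d x + J x b0 s1 / PX d x + J x b0 se / PX d x +
        (J x b1 s0 / PX d x + J x b1 s1 / PX d x + J x b1 se / PX d x))
      with ((J x b0 s0 + J x b0 s1 + J x b0 se + (J x b1 s0 + J x b1 s1 + J x b1 se)) / PX d x)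
      by (field; lra).
      rewrite Hm. field. lra. }
  assert (HMI : MI b d (cond_of d J) = r).
  { apply (Rmult_eq_reg_r (ln b)); [|lra].
    rewrite (achieve b d (cond_of d J) L m a c); auto; try lra.
    - rewrite SG_val by auto. rewrite Hr, Es, Ex. ring.
    - intros x z y. rewrite cond_Qout by auto. apply HE. }
  split; [exact Hm|]. split; [|exact HMI].
  split. split; auto.
  intros W' HF. rewrite HMI.
  pose proof (converse b d ds dx W' L m a c Hb Hd HF HL Hmm Ha Hc Ha0 Hc0 C1 C3) as HC.
  replace r with (((1 - d) * ln L + d * ln m + ln a * (ds - d / 2) + ln c * dx) / ln b).
  exact HC. rewrite <- Hr. field. lra.
Qed.

Lemma reg1 b d ds dx th : 1 < b -> 0 < d < / 3 -> D1 d ds dx -> 0 <= th <= 1 ->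
  attains b d ds dx (J1 d dx th)
       (h b d + (1 - d) * logb b 2 - h b dx - dx * logb b 2).
Proof.
  intros Hb Hd [[Hx0 Hx1] Hs] Ht. pose proof (lnb_pos b Hb).
  assert (PY : forall y, 0 <= PY1 d dx y).
  { intros y; destruct y; simpl; (apply Rmult_le_pos; [|left; apply Rinv_0_lt_compat]; lra). }
  assert (PXY : forall x y, 0 <= PXgY1 dx x y).
  { intros x y; unfold PXgY1; destruct (sym_eqb x y); lra. }
  assert (PZY : forall z y, 0 <= PZgY1 th z y).
  { intros z y; destruct z, y; simpl; lra. }
  assert (Es : Edist_s d (cond_of d (J1 d dx th)) = dx / 2 + d / 2).
  { rewrite cond_Eds by lra. unfold J1, PXgY1; simpl. field. lra. }
  assert (Ex : Edist_x d (cond_of d (J1 d dx th)) = dx).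
  { rewrite cond_Edx by lra. unfold J1, PXgY1; simpl. field. lra. }
  apply (attains_gen b d ds dx _ (2 * (1 - dx) / (1 - d)) ((1 - dx) / d) 1 (dx / (2 * (1 - dx))));
    try lra.
  - intros x; destruct x; unfold J1, PXgY1, sumB, sumS; rewrite ?PX0, ?PX1, ?PXe; simpl; field; lra.
  - intros x z y; unfold J1; repeat apply Rmult_le_pos; auto.
  - apply Rdiv_lt_0_compat; lra.
  - apply Rdiv_lt_0_compat; lra.
  - split. apply Rmult_le_pos; [|left; apply Rinv_0_lt_compat]; lra.
    apply (Rmult_le_reg_r (2 * (1 - dx))). lra. unfold Rdiv. rewrite Rmult_assoc, Rinv_l; lra.
  - intros E. assert (dx = 0); [|lra].
    unfold Rdiv in E. apply Rmult_integral in E. destruct E as [E|E]; auto.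
    exfalso. apply (Rinv_neq_0_compat (2 * (1 - dx))); lra.
  - apply Req_le. field. lra.
  - apply Req_le. field. lra.
  - rewrite ln_1; ring.
  - rewrite Ex; reflexivity.
  - intros x z y; destruct x, z, y; unfold J1, PXgY1, Kc; rewrite ?PX0, ?PX1, ?PXe; simpl; field; lra.
  - rewrite ln_1, lnq_mul by lra. rewrite ln_mult by lra.
    rewrite (lndiv (2 * (1 - dx))) by lra. rewrite ln_mult, lndiv by lra.
    unfold h, logb. rewrite !xlogx_eq by auto.
    rewrite (xl_pos d), (xl_pos (1 - d)), (xl_pos (1 - dx)) by lra.
    field. lra.
Qed.

Lemma reg2 b d ds dx : 1 < b -> 0 < d < / 3 -> D2 d ds dx ->
  attains b d ds dx (J2 d dx)
       ((1 - d) * (logb b 2 - h b ((dx - d) / (1 - d)))).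
Proof.
  intros Hb Hd [[Hx0 Hx1] Hs]. pose proof (lnb_pos b Hb).
  assert (Es : Edist_s d (cond_of d (J2 d dx)) = dx - d / 2).
  { rewrite cond_Eds by lra. unfold J2, PXgY2; simpl. field. }
  assert (Ex : Edist_x d (cond_of d (J2 d dx)) = dx).
  { rewrite cond_Edx by lra. unfold J2, PXgY2; simpl. field. }
  apply (attains_gen b d ds dx _ (2 * (1 - dx) / (1 - d)) ((1 - dx) / (dx - d)) 1 ((dx - d) / (1 - dx)));
    try lra.
  - intros x; destruct x; unfold J2, PXgY2, sumB, sumS; rewrite ?PX0, ?PX1, ?PXe; simpl; field; lra.
  - intros x z y; destruct x, z, y; unfold J2, PXgY2; simpl; lra.
  - apply Rdiv_lt_0_compat; lra.
  - apply Rdiv_lt_0_compat; lra.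
  - split. apply Rmult_le_pos; [|left; apply Rinv_0_lt_compat]; lra.
    apply (Rmult_le_reg_r (1 - dx)). lra. unfold Rdiv. rewrite Rmult_assoc, Rinv_l; lra.
  - intros E. exfalso. assert (0 < (dx - d) / (1 - dx)) by (apply Rdiv_lt_0_compat; lra). lra.
  - apply Req_le. field. lra.
  - assert (E : (1 - d) / 2 * (2 * (1 - dx) / (1 - d)) * ((dx - d) / (1 - dx)) +
      (1 - d) / 2 * (2 * (1 - dx) / (1 - d)) * 1 * ((dx - d) / (1 - dx)) + d * ((1 - dx) / (dx - d))
      = 1 - (dx - d - d) * ((1 - d) - 2 * (dx - d)) / (dx - d)) by (field; lra).
    rewrite E. assert (0 <= (dx - d - d) * ((1 - d) - 2 * (dx - d)) / (dx - d)); [|lra].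
    apply Rmult_le_pos; [apply Rmult_le_pos|left; apply Rinv_0_lt_compat]; lra.
  - rewrite ln_1; ring.
  - rewrite Ex; reflexivity.
  - intros x z y; destruct x, z, y; unfold J2, PXgY2, Kc; rewrite ?PX0, ?PX1, ?PXe; simpl; field; lra.
  - rewrite ln_1. rewrite (lndiv (dx - d)) by lra.
    rewrite (lndiv (2 * (1 - dx))) by lra. rewrite ln_mult, lndiv by lra.
    unfold h, logb. rewrite !xlogx_eq by auto.
    replace (1 - (dx - d) / (1 - d)) with ((1 - dx) / (1 - d)) by (field; lra).
    rewrite (xl_pos ((dx - d) / (1 - d))), (xl_pos ((1 - dx) / (1 - d))).
    rewrite !lndiv by lra. field. lra.
    apply Rdiv_lt_0_compat; lra. apply Rdiv_lt_0_compat; lra.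
Qed.

Lemma reg3 b d ds dx : 1 < b -> 0 < d < / 3 -> D3 d ds dx ->
  attains b d ds dx (J3 d ds)
       ((1 - d) * (logb b 2 - h b ((ds - d / 2) / (1 - d)))).
Proof.
  intros Hb Hd [Hx [Hs0 Hs1]]. pose proof (lnb_pos b Hb).
  assert (Es : Edist_s d (cond_of d (J3 d ds)) = ds).
  { rewrite cond_Eds by lra. unfold J3, PXgZ3; simpl. field. }
  assert (Ex : Edist_x d (cond_of d (J3 d ds)) = ds + d / 2).
  { rewrite cond_Edx by lra. unfold J3, PXgZ3; simpl. field. }
  apply (attains_gen b d ds dx _ (2 * (1 - ds - d / 2) / (1 - d)) 1
     ((ds - d / 2) / (1 - ds - d / 2)) 1); try lra.
  - intros x; destruct x; unfold J3, PXgZ3, sumB, sumS; rewrite ?PX0, ?PX1, ?PXe; simpl; field; lra.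
  - intros x z y; destruct x, z, y; unfold J3, PXgZ3; simpl; lra.
  - apply Rdiv_lt_0_compat; lra.
  - split. apply Rmult_le_pos; [|left; apply Rinv_0_lt_compat]; lra.
    apply (Rmult_le_reg_r (1 - ds - d / 2)). lra. unfold Rdiv. rewrite Rmult_assoc, Rinv_l; lra.
  - intros E. unfold Rdiv in E. apply Rmult_integral in E. destruct E as [E|E]; [lra|].
    exfalso. apply (Rinv_neq_0_compat (1 - ds - d / 2)); lra.
  - apply Req_le. field. lra.
  - apply Req_le. field. lra.
  - rewrite Es; reflexivity.
  - rewrite ln_1; ring.
  - intros x z y; destruct x, z, y; unfold J3, PXgZ3, Kc; rewrite ?PX0, ?PX1, ?PXe; simpl; field; lra.
  - rewrite ln_1, lnq_mul by lra.
    rewrite (lndiv (2 * (1 - ds - d / 2))) by lra. rewrite ln_mult by lra.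
    unfold h, logb. rewrite !xlogx_eq by auto.
    replace (1 - (ds - d / 2) / (1 - d)) with ((1 - ds - d / 2) / (1 - d)) by (field; lra).
    rewrite !xl_div by lra. rewrite (xl_pos (1 - ds - d / 2)) by lra.
    field. lra.
Qed.

Lemma divnn x y : x <= 0 -> y < 0 -> 0 <= x / y.
Proof. intros. replace (x / y) with ((- x) / (- y)) by (field; lra).
  apply Rmult_le_pos; [|left; apply Rinv_0_lt_compat]; lra. Qed.

Lemma reg4 b d ds dx : 1 < b -> 0 < d < / 3 -> D4 d ds dx ->
  attains b d ds dx (J4 d ds dx)
       (h b d + (1 - d) * logb b 2
        - H3 b (ds - d / 2) (dx - ds + d / 2) (1 - dx)).
Proof.
  intros Hb Hd [[Hx0 Hx1] [Hs0 Hs1]]. pose proof (lnb_pos b Hb).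
  assert (Dn : d + 4 * dx - 2 * ds - 2 < 0) by lra.
  assert (Es : Edist_s d (cond_of d (J4 d ds dx)) = ds).
  { rewrite cond_Eds by lra. unfold J4, PZY4, PXgZY4; simpl. field. lra. }
  assert (Ex : Edist_x d (cond_of d (J4 d ds dx)) = dx).
  { rewrite cond_Edx by lra. unfold J4, PZY4, PXgZY4; simpl. field. lra. }
  assert (Mg : forall x, sumB (fun z => sumS (fun y => J4 d ds dx x z y)) = PX d x).
  { intros x; destruct x; unfold J4, PZY4, PXgZY4, sumB, sumS; rewrite ?PX0, ?PX1, ?PXe; simpl; field; lra. }
  assert (Nn : forall x z y, 0 <= J4 d ds dx x z y).
  { assert (0 <= (d + dx - 1) / (d + 4 * dx - 2 * ds - 2)) by (apply divnn; lra).
    assert (0 <= (dx - ds - d / 2) / (d + 4 * dx - 2 * ds - 2)) by (apply divnn; lra).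
    intros x z y; destruct x, z, y; unfold J4, PZY4, PXgZY4; simpl;
    first [apply Rmult_le_pos | idtac]; lra. }
  destruct (Rle_lt_or_eq_dec 0 (dx - ds + d / 2)) as [Hg|Hg]; [lra| |].
  -
    apply (attains_gen b d ds dx _ (2 * (1 - dx) / (1 - d)) ((1 - dx) / d)
       ((ds - d / 2) / (dx - ds + d / 2)) ((dx - ds + d / 2) / (1 - dx))); auto; try lra.
    + apply Rdiv_lt_0_compat; lra.
    + apply Rdiv_lt_0_compat; lra.
    + split. apply Rmult_le_pos; [|left; apply Rinv_0_lt_compat]; lra.
      apply (Rmult_le_reg_r (dx - ds + d / 2)). lra. unfold Rdiv. rewrite Rmult_assoc, Rinv_l; lra.
    + split. apply Rmult_le_pos; [|left; apply Rinv_0_lt_compat]; lra.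
      apply (Rmult_le_reg_r (1 - dx)). lra. unfold Rdiv. rewrite Rmult_assoc, Rinv_l; lra.
    + intros E. unfold Rdiv in E. apply Rmult_integral in E. destruct E as [E|E]; [lra|].
      exfalso. apply (Rinv_neq_0_compat (dx - ds + d / 2)); lra.
    + intros E. exfalso. assert (0 < (dx - ds + d / 2) / (1 - dx)) by (apply Rdiv_lt_0_compat; lra). lra.
    + apply Req_le. field. lra.
    + apply Req_le. field. lra.
    + rewrite Es; reflexivity.
    + rewrite Ex; reflexivity.
    + intros x z y; destruct x, z, y; unfold J4, PZY4, PXgZY4, Kc; rewrite ?PX0, ?PX1, ?PXe; simpl; field; lra.
    + rewrite (lnq_mul (ds - d / 2)) by lra.
      rewrite (lndiv (dx - ds + d / 2)) by lra.
      rewrite (lndiv (2 * (1 - dx))) by lra. rewrite ln_mult, lndiv by lra.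
      unfold h, H3, logb. rewrite !xlogx_eq by auto.
      rewrite (xl_pos d), (xl_pos (1 - d)), (xl_pos (1 - dx)), (xl_pos (dx - ds + d / 2)) by lra.
      field. lra.
  - assert (E1 : dx = 0) by lra. assert (E2 : ds = d / 2) by lra. subst dx ds.
    apply (attains_gen b d (d / 2) 0 _ (2 / (1 - d)) (1 / d) 0 0); auto; try lra.
    + apply Rdiv_lt_0_compat; lra.
    + apply Rdiv_lt_0_compat; lra.
    + apply Req_le. field. lra.
    + apply Req_le. field. lra.
    + rewrite ln0; ring.
    + rewrite ln0; ring.
    + intros x z y; destruct x, z, y; unfold J4, PZY4, PXgZY4, Kc; rewrite ?PX0, ?PX1, ?PXe; simpl; field; lra.
    + replace (d / 2 - d / 2) with 0 by ring. replace (0 - d / 2 + d / 2) with 0 by ring.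
      replace (1 - 0) with 1 by ring.
      rewrite ln0. rewrite !lndiv by lra. rewrite ln_1.
      unfold h, H3, logb. rewrite !xlogx_eq by auto.
      rewrite (xl_pos d), (xl_pos (1 - d)), (xl_pos 1) by lra. unfold xl.
      destruct (Req_EM_T 0 0); [|lra]. rewrite ln_1. field. lra.
Qed.

Definition J5 d : joint := fun x z y => match z, y with b0, s0 => PX d x | _, _ => 0 end.

Lemma reg5 b d ds dx : 1 < b -> 0 < d < / 3 -> D5 d ds dx ->
  exists W : kernel, minimizer b d ds dx W /\ MI b d W = 0.
Proof.
  intros Hb Hd [Hx Hs].
  destruct (attains_gen b d ds dx (J5 d) 1 1 1 1 0) as [_ [Hm HMI]]; auto; try lra.
  - intros x; destruct x; unfold J5, sumB, sumS; simpl; ring.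
  - intros x z y; destruct z, y; simpl; try lra; left; apply PX_pos; lra.
  - rewrite cond_Eds by lra. unfold J5; simpl. rewrite ?PX0, ?PX1, ?PXe. lra.
  - rewrite cond_Edx by lra. unfold J5; simpl. rewrite ?PX0, ?PX1, ?PXe. lra.
  - rewrite ln_1; ring.
  - rewrite ln_1; ring.
  - intros x z y; destruct x, z, y; unfold J5, Kc; simpl; rewrite ?PX0, ?PX1, ?PXe; field; lra.
  - rewrite ln_1; ring.
  - exists (cond_of d (J5 d)); auto.
Qed.

Theorem theorem5 (b delta ds dx : R) :
  1 < b -> 0 < delta < / 3 -> delta / 2 <= ds -> 0 <= dx ->
  (D1 delta ds dx -> forall theta : R, 0 <= theta <= 1 ->
     attains b delta ds dx (J1 delta dx theta)
       (h b delta + (1 - delta) * logb b 2 - h b dx - dx * logb b 2)) /\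
  (D2 delta ds dx ->
     attains b delta ds dx (J2 delta dx)
       ((1 - delta) * (logb b 2 - h b ((dx - delta) / (1 - delta))))) /\
  (D3 delta ds dx ->
     attains b delta ds dx (J3 delta ds)
       ((1 - delta) * (logb b 2 - h b ((ds - delta / 2) / (1 - delta))))) /\
  (D4 delta ds dx ->
     attains b delta ds dx (J4 delta ds dx)
       (h b delta + (1 - delta) * logb b 2
        - H3 b (ds - delta / 2) (dx - ds + delta / 2) (1 - dx))) /\
  (D5 delta ds dx ->
     exists W : kernel, minimizer b delta ds dx W /\ MI b delta W = 0).
Proof.
  intros Hb Hd Hs Hx. split; [|split; [|split; [|split]]].
  - intros H th Ht. apply reg1; auto.
  - intros H. apply reg2; auto.
  - intros H. apply reg3; auto.
  - intros H. apply reg4; auto.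
  - intros H. apply reg5; auto.
Qed.
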